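(* Let $R$ be a $*$-ring and equip the power series ring $R[[x]]$ with the involution $(\sum_{i\ge0}a_ix^i)^*=\sum_{i\ge0}a_i^*x^i$. Then $R[[x]]$ is $*$-clean if and only if $R$ is $*$-clean.
   Context: A $*$-ring is a ring with identity with an involution $*$. A projection is $p$ with $p^2=p=p^*$. A $*$-ring is $*$-clean if every element is a sum of a projection and a unit. *)

(* Defs.v *)
From mathcomp Require Import all_boot all_algebra.
Set Implicit Arguments. Unset Strict Implicit. Unset Printing Implicit Defensive.
Import GRing.Theory.
Local Open Scope ring_scope.

Definition is_involution (R : pzRingType) (star : R -> R) : Prop :=
  [/\ forall a b : R, star (a + b) = star a + star b,
      forall a b : R, star (a * b) = star b * star a
    & forall a : R, star (star a) = a].

Definition is_unit_of (T : Type) (mul : T -> T -> T) (one : T) (u : T) : Prop :=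
  exists v : T, mul u v = one /\ mul v u = one.

Definition is_projection_of (T : Type) (mul : T -> T -> T) (star : T -> T) (p : T) : Prop :=
  mul p p = p /\ star p = p.

Definition star_clean_of (T : Type) (add mul : T -> T -> T) (one : T) (star : T -> T) : Prop :=
  forall a : T, exists p u : T,
    is_projection_of mul star p /\ is_unit_of mul one u /\ a = add p u.

Definition star_clean (R : pzRingType) (star : R -> R) : Prop :=
  star_clean_of +%R *%R 1 star.

Definition pseries (R : pzRingType) := nat -> R.

Definition ps_add (R : pzRingType) (f g : pseries R) : pseries R := fun n => f n + g n.
Definition ps_mul (R : pzRingType) (f g : pseries R) : pseries R :=
  fun n => \sum_(i < n.+1) f i * g (n - i)%N.
Definition ps_one (R : pzRingType) : pseries R := fun n => if n == 0%N then 1 else 0.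
Definition ps_star (R : pzRingType) (star : R -> R) (f : pseries R) : pseries R :=
  fun n => star (f n).

Definition ps_star_clean (R : pzRingType) (star : R -> R) : Prop :=
  star_clean_of (@ps_add R) (@ps_mul R) (@ps_one R) (ps_star star).

(* Main.v *)
Require Import Defs.
From mathcomp Require Import all_boot all_algebra.
From Stdlib Require Import FunctionalExtensionality.

Import GRing.Theory.
Local Open Scope ring_scope.

Section S.
Variable R : pzRingType.

Lemma ps_mulE (f g : pseries R) n :
  ps_mul f g n = \sum_(0 <= i < n.+1) f i * g (n - i)%N.
Proof. by rewrite /ps_mul big_mkord. Qed.

Lemma ps_mulA (f g h : pseries R) n :
  ps_mul (ps_mul f g) h n = ps_mul f (ps_mul g h) n.
Proof.
rewrite !ps_mulE.
transitivity (\sum_(0 <= i < n.+1) \sum_(0 <= j < n.+1)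
   (if (j <= i)%N then f j * g (i - j)%N * h (n - i)%N else 0)).
  apply: eq_big_nat => i /andP[_ Hi].
  rewrite ps_mulE mulr_suml.
  rewrite [RHS](big_cat_nat (n:=i.+1)) //=.
  rewrite [X in _ = _ + X]big1_seq ?addr0; last first.
    move=> j /andP[_]; rewrite mem_index_iota => /andP[Hj _].
    by rewrite leqNgt Hj.
  by apply: eq_big_nat => j /andP[_ Hj]; rewrite ltnS in Hj; rewrite Hj.
rewrite exchange_big_nat.
apply: eq_big_nat => j /andP[_ Hj].
rewrite ps_mulE mulr_sumr.
rewrite (big_cat_nat (n:=j)) //=; last exact: ltnW.
rewrite big1_seq ?add0r; last first.
  move=> i /andP[_]; rewrite mem_index_iota => /andP[_ Hi].
  by rewrite leqNgt Hi.
rewrite -{1}(add0n j) big_addn subSn //.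
apply: eq_big_nat => k _.
by rewrite leq_addl mulrA addnK addnC subnDA.
Qed.

Lemma ps_mul1 (f : pseries R) : ps_mul f (@ps_one R) = f.
Proof.
apply: functional_extensionality => n.
rewrite ps_mulE big_nat_recr //= subnn /ps_one eqxx mulr1 big1_seq ?add0r //.
move=> i /andP[_]; rewrite mem_index_iota => /andP[_ Hi].
by rewrite subn_eq0 leqNgt Hi mulr0.
Qed.

Lemma ps_1mul (f : pseries R) : ps_mul (@ps_one R) f = f.
Proof.
apply: functional_extensionality => n.
rewrite ps_mulE big_nat_recl //= subn0 /ps_one eqxx mul1r big1_seq ?addr0 //.
by move=> i _; rewrite mul0r.
Qed.

Lemma ps_mulA' (f g h : pseries R) :
  ps_mul (ps_mul f g) h = ps_mul f (ps_mul g h).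
Proof. apply: functional_extensionality => n; exact: ps_mulA. Qed.

Fixpoint bld (F : nat -> (nat -> R) -> R) n : seq R :=
  match n with
  | 0 => [:: F 0%N (fun _ => 0)]
  | m.+1 => rcons (bld F m) (F m.+1 (fun k => nth 0 (bld F m) k))
  end.
Definition srec F n := nth 0 (bld F n) n.

Lemma size_bld F n : size (bld F n) = n.+1.
Proof. by elim: n => //= n IH; rewrite size_rcons IH. Qed.

Lemma nth_bld F n k : (k <= n)%N -> nth 0 (bld F n) k = srec F k.
Proof.
elim: n => [|n IH]; first by rewrite leqn0 => /eqP ->.
rewrite leq_eqVlt => /orP[/eqP -> //|Hk].
by rewrite /= nth_rcons size_bld Hk IH.
Qed.

Lemma srecS F n : srec F n.+1 = F n.+1 (fun k => nth 0 (bld F n) k).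
Proof. by rewrite /srec /= nth_rcons size_bld ltnn eqxx. Qed.

Lemma srec0 F : srec F 0 = F 0%N (fun _ => 0).
Proof. by []. Qed.

Lemma unit_const (u : pseries R) w' :
  u 0%N * w' = 1 -> w' * u 0%N = 1 -> is_unit_of (@ps_mul R) (@ps_one R) u.
Proof.
move=> H1 H2.
pose Fr n (g : nat -> R) := if n is m.+1 then
   - (w' * \sum_(0 <= i < m.+1) u i.+1 * g (m - i)%N) else w'.
pose Fl n (g : nat -> R) := if n is m.+1 then
   - ((\sum_(0 <= i < m.+1) g i * u (m.+1 - i)%N) * w') else w'.
have Hr : ps_mul u (srec Fr) = @ps_one R.
  apply: functional_extensionality => -[|n].
    by rewrite ps_mulE big_nat1 srec0 /ps_one /= H1.
  rewrite ps_mulE big_nat_recl // subn0 srecS /= /ps_one /=.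
  have -> : \sum_(0 <= i < n.+1) u i.+1 * srec Fr (n.+1 - i.+1)%N =
            \sum_(0 <= i < n.+1) u i.+1 * nth 0 (bld Fr n) (n - i)%N.
    apply: eq_big_nat => i /andP[_ Hi]; rewrite subSS nth_bld //; exact: leq_subr.
  by rewrite mulrN mulrA H1 mul1r addNr.
have Hl : ps_mul (srec Fl) u = @ps_one R.
  apply: functional_extensionality => -[|n].
    by rewrite ps_mulE big_nat1 srec0 /ps_one /= H2.
  rewrite ps_mulE big_nat_recr // subnn srecS /= /ps_one /=.
  have -> : \sum_(0 <= i < n.+1) srec Fl i * u (n.+1 - i)%N =
            \sum_(0 <= i < n.+1) nth 0 (bld Fl n) i * u (n.+1 - i)%N.
    apply: eq_big_nat => i /andP[_ Hi]; rewrite nth_bld //.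
  by rewrite mulNr -mulrA H2 mulr1 addrN.
exists (srec Fr); split => //.
have <- : srec Fl = srec Fr.
  by rewrite -[srec Fl]ps_mul1 -Hr -ps_mulA' Hl ps_1mul.
exact: Hl.
Qed.
End S.

Theorem proposition2p8 (R : pzRingType) (star : R -> R) :
  is_involution star -> (ps_star_clean star <-> star_clean star).
Proof.
move=> [sD sM sK]; split.
  move=> H a.
  have [p [u [[Hpp Hps] [[v [Huv Hvu]] Ha]]]] :=
    H (fun n => if n == 0%N then a else 0).
  exists (p 0%N), (u 0%N); split; [split|split].
  - by have := congr1 (fun g => g 0%N) Hpp; rewrite /= ps_mulE big_nat1.
  - by have := congr1 (fun g => g 0%N) Hps.
  - exists (v 0%N); split.
      by have := congr1 (fun g => g 0%N) Huv; rewrite /= ps_mulE big_nat1.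
    by have := congr1 (fun g => g 0%N) Hvu; rewrite /= ps_mulE big_nat1.
  - by have := congr1 (fun g => g 0%N) Ha.
move=> H f.
have [e [w [[Hee Hes] [[w' [Hw1 Hw2]] Hf]]]] := H (f 0%N).
have s0 : star 0 = 0.
  have h := sD 0 0; rewrite addr0 in h.
  by apply: (@addrI _ (star 0)); rewrite addr0 -h.
pose p := fun n : nat => if n == 0%N then e else 0.
exists p, (fun n => f n - p n); split; [split|split].
- apply: functional_extensionality => -[|n].
    by rewrite ps_mulE big_nat1.
  rewrite ps_mulE big_nat_recl // big1_seq ?addr0 /p /=; first by rewrite mulr0.
  by move=> i _; rewrite mul0r.
- by apply: functional_extensionality => -[|n]; rewrite /ps_star /p /=.
- apply: (@unit_const R _ w'); rewrite /p /=.
    by rewrite Hf addrC addKr.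
  by rewrite Hf addrC addKr.
- apply: functional_extensionality => n; rewrite /ps_add.
  by rewrite addrC subrK.
Qed.
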